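(* An ES combination operator $\nabla$ satisfies (ESF1)–(ESF8) if and only if there exists a unique faithful assignment $\Phi\mapsto\succeq_\Phi$ such that $[\![B(\nabla(\Phi,E))]\!]=\max([\![B(E)]\!],\succeq_\Phi)$ for every profile $\Phi$ and every $E\in\mathcal E$.
   Context: Setting: an epistemic space $(\mathcal E,B,\mathcal L_{\mathcal P})$ ($\mathcal E$ nonempty, $B:\mathcal E\to\mathcal L_{\mathcal P}$ with image modulo equivalence exactly the consistent formulas over the finite variable set $\mathcal P$; $\mathcal W_{\mathcal P}$ valuations, $[\![\phi]\!]$ models); agents form a well-ordered set $\mathcal S$; a society is a nonempty finite $N\subseteq\mathcal S$; an $N$-profile is $\Phi:N\to\mathcal E$, $E_i=\Phi(i)$, identified with $E_i$ when $N=\{i\}$; profiles on $\{i_1<\dots<i_n\}$ and $\{j_1<\dots<j_m\}$ are equivalent ($\equiv$) if $n=m$ and entries coincide position-wise; $\Phi\upharpoonright_M$ restriction; partitions $\{N_1,N_2\}$ have nonempty disjoint parts. An ES combination operator maps (profile, $E$) to $\nabla(\Phi,E)\in\mathcal E$. Postulates: (ESF1) $B(\nabla(\Phi,E))\vdash B(E)$; (ESF2) if $\Phi\equiv\Phi'$ and $B(E)\equiv B(E')$ then $B(\nabla(\Phi,E))\equiv B(\nabla(\Phi',E'))$; (ESF3) if $B(E)\equiv B(E')\wedge B(E'')$ then $B(\nabla(\Phi,E'))\wedge B(E'')\vdash B(\nabla(\Phi,E))$; (ESF4) if moreover $B(\nabla(\Phi,E'))\wedge B(E'')\nvdash\bot$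 then $B(\nabla(\Phi,E))\vdash B(\nabla(\Phi,E'))\wedge B(E'')$; (ESF5) if $E_j\ne E_k$ ($j,k$ agents) there is $E'$ with $B(\nabla(E_j,E'))\not\equiv B(\nabla(E_k,E'))$; (ESF6) if $\bigwedge_{i\in N}B(E_i)\wedge B(E)\nvdash\bot$ then $B(\nabla(\Phi,E))\equiv\bigwedge_{i\in N}B(E_i)\wedge B(E)$; (ESF7) $B(\nabla(\Phi\upharpoonright_{N_1},E))\wedge B(\nabla(\Phi\upharpoonright_{N_2},E))\vdash B(\nabla(\Phi,E))$; (ESF8) if that conjunction is consistent then $B(\nabla(\Phi,E))\vdash B(\nabla(\Phi\upharpoonright_{N_1},E))\wedge B(\nabla(\Phi\upharpoonright_{N_2},E))$. An assignment maps each profile to a total preorder $\succeq_\Phi$ on $\mathcal W_{\mathcal P}$; it is basic if $\Phi\equiv\Psi$ implies $\succeq_\Phi=\succeq_\Psi$; it is faithful if basic and: (1) $E_j\ne E_k$ implies $\succeq_{E_j}\ne\succeq_{E_k}$; (2) if $\bigwedge_{i\in N}B(E_i)\nvdash\bot$ then $[\![\bigwedge_{i\in N}B(E_i)]\!]=\max(\succeq_\Phi)$; (3) $w\succeq_{\Phi\upharpoonright_{N_1}}w'$ and $w\succeq_{\Phi\upharpoonright_{N_2}}w'$ imply $w\succeq_\Phi w'$; (4) $w\succeq_{\Phi\upharpoonright_{N_1}}w'$ and $w\succ_{\Phi\upharpoonright_{N_2}}w'$ imply $w\succ_\Phi w'$. $\max(C,\succeq)=\{c\in C:c\succeq x\ \forall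 x\in C\}$. *)

(* Defs.v *)
From HB Require Import structures.
From mathcomp Require Import all_boot all_order.
Set Implicit Arguments. Unset Strict Implicit. Unset Printing Implicit Defensive.
Import Order.TTheory.

Inductive form (P : Type) : Type :=
  | Fvar of P
  | Ftop
  | Fbot
  | Fneg of form P
  | Fand of form P & form P
  | For of form P & form P
  | Fimp of form P & form P.
Arguments Ftop {P}. Arguments Fbot {P}.

Section Logic.
Variable P : finType.

Definition valuation := {ffun P -> bool}.

Fixpoint holds (w : valuation) (f : form P) : bool :=
  match f with
  | Fvar x => w x
  | Ftop => true
  | Fbot => false
  | Fneg g => ~~ holds w g
  | Fand g h => holds w g && holds w h
  | For g h => holds w g || holds w h
  | Fimp g h => holds w g ==> holds w h
  end.

Definition models (f : form P) : {set valuation} := [set w | holds w f].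
Definition entails (f g : form P) : Prop := models f \subset models g.
Definition lequiv (f g : form P) : Prop := entails f g /\ entails g f.
Definition consistent (f : form P) : Prop := ~ entails f Fbot.

Definition bigconj (s : seq (form P)) : form P := foldr (@Fand P) Ftop s.

Definition maxset (C : {set valuation}) (R : rel valuation) : {set valuation} :=
  [set c in C | [forall x in C, R c x]].

Definition strict (R : rel valuation) : rel valuation :=
  fun w w' => R w w' && ~~ R w' w.

Definition total_preorder (R : rel valuation) : Prop := total R /\ transitive R.
End Logic.

Definition epistemic_space (P : finType) (E : Type) (B : E -> form P) : Prop :=
  inhabited E /\
  (forall e, consistent (B e)) /\
  (forall f : form P, consistent f -> exists e, lequiv (B e) f).

Section Profiles.
Variables (d : Order.disp_t) (S : orderType d) (E : Type).

(* A profile Phi : N -> E, N a nonempty finite set of agents, is represented by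
   its graph, listed in increasing order of agents. *)
Definition agent_lt (a b : S * E) : bool := (a.1 < b.1)%O.

Record profile := Profile {
  graph : seq (S * E);
  graph_sorted : sorted agent_lt graph;
  graph_nonempty : (0 < size graph)%N }.

Definition society (Phi : profile) : seq S := map fst (graph Phi).
Definition entries (Phi : profile) : seq E := map snd (graph Phi).

Definition prof_equiv (Phi Psi : profile) : Prop := entries Phi = entries Psi.

(* the single-agent profile {i} -> e, identified with e *)
Definition single (i : S) (e : E) : profile :=
  @Profile [:: (i, e)] erefl erefl.

Lemma agent_lt_trans : transitive agent_lt.
Proof. by move=> b a c; rewrite /agent_lt; apply: lt_trans. Qed.

Lemma restrict_sorted (p : pred S) (Phi : profile) :
  sorted agent_lt (filter (fun a => p a.1) (graph Phi)).
Proof. exact: (sorted_filter agent_lt_trans _ (graph_sorted Phi)). Qed.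

Lemma restrict_nonempty (p : pred S) (Phi : profile) :
  has (fun a => p a.1) (graph Phi) ->
  (0 < size (filter (fun a => p a.1) (graph Phi)))%N.
Proof. by rewrite size_filter -has_count. Qed.

Definition restrict (Phi : profile) (p : pred S)
  (h : has (fun a => p a.1) (graph Phi)) : profile :=
  @Profile _ (restrict_sorted p Phi) (restrict_nonempty h).
Arguments restrict : clear implicits.
End Profiles.
Arguments restrict {d S E} Phi p h.

Section Postulates.
Variables (P : finType) (d : Order.disp_t) (S : orderType d) (E : Type)
  (B : E -> form P).
Variable nabla : profile S E -> E -> E.

Definition conjB (Phi : profile S E) : form P := bigconj (map B (entries Phi)).

Definition ESF1 := forall Phi e, entails (B (nabla Phi e)) (B e).
Definition ESF2 := forall Phi Phi' e e', prof_equiv Phi Phi' -> lequiv (B e) (B e') ->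
  lequiv (B (nabla Phi e)) (B (nabla Phi' e')).
Definition ESF3 := forall Phi e e' e'', lequiv (B e) (Fand (B e') (B e'')) ->
  entails (Fand (B (nabla Phi e')) (B e'')) (B (nabla Phi e)).
Definition ESF4 := forall Phi e e' e'', lequiv (B e) (Fand (B e') (B e'')) ->
  consistent (Fand (B (nabla Phi e')) (B e'')) ->
  entails (B (nabla Phi e)) (Fand (B (nabla Phi e')) (B e'')).
Definition ESF5 := forall (j k : S) (ej ek : E), ej <> ek ->
  exists e', ~ lequiv (B (nabla (single j ej) e')) (B (nabla (single k ek) e')).
Definition ESF6 := forall Phi e, consistent (Fand (conjB Phi) (B e)) ->
  lequiv (B (nabla Phi e)) (Fand (conjB Phi) (B e)).
(* partitions {N1, N2} of N: N1 = {i in N | p i}, N2 = {i in N | ~~ p i}, both nonempty *)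
Definition ESF7 := forall Phi e (p : pred S)
  (h1 : has (fun a => p a.1) (graph Phi)) (h2 : has (fun a => ~~ p a.1) (graph Phi)),
  entails (Fand (B (nabla (restrict Phi p h1) e)) (B (nabla (restrict Phi (fun x => ~~ p x) h2) e))) (B (nabla Phi e)).
Definition ESF8 := forall Phi e (p : pred S)
  (h1 : has (fun a => p a.1) (graph Phi)) (h2 : has (fun a => ~~ p a.1) (graph Phi)),
  consistent (Fand (B (nabla (restrict Phi p h1) e)) (B (nabla (restrict Phi (fun x => ~~ p x) h2) e))) ->
  entails (B (nabla Phi e)) (Fand (B (nabla (restrict Phi p h1) e)) (B (nabla (restrict Phi (fun x => ~~ p x) h2) e))).

Definition ESF_all := ESF1 /\ ESF2 /\ ESF3 /\ ESF4 /\ ESF5 /\ ESF6 /\ ESF7 /\ ESF8.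

Definition assignment := profile S E -> rel (valuation P).

Definition is_assignment (A : assignment) : Prop :=
  forall Phi, total_preorder (A Phi).

Definition basic (A : assignment) : Prop :=
  is_assignment A /\ forall Phi Psi, prof_equiv Phi Psi -> A Phi = A Psi.

Definition faithful (A : assignment) : Prop :=
  [/\ basic A,
      (forall (j k : S) (ej ek : E), ej <> ek -> A (single j ej) <> A (single k ek)),
      (forall Phi, consistent (conjB Phi) -> models (conjB Phi) = maxset setT (A Phi)),
      (forall Phi (p : pred S)
         (h1 : has (fun a => p a.1) (graph Phi)) (h2 : has (fun a => ~~ p a.1) (graph Phi))
         w w', A (restrict Phi p h1) w w' -> A (restrict Phi (fun x => ~~ p x) h2) w w' -> A Phi w w')
    & (forall Phi (p : pred S)
         (h1 : has (fun a => p a.1) (graph Phi)) (h2 : has (fun a => ~~ p a.1) (graph Phi))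
         w w', A (restrict Phi p h1) w w' -> strict (A (restrict Phi (fun x => ~~ p x) h2)) w w' ->
         strict (A Phi) w w')].

Definition represents (A : assignment) : Prop :=
  forall Phi e, models (B (nabla Phi e)) = maxset (models (B e)) (A Phi).
End Postulates.

(* Main.v *)
Require Import Defs.
From HB Require Import structures.
From mathcomp Require Import all_boot all_order.
From Stdlib Require Import ClassicalEpsilon FunctionalExtensionality Classical.
Set Implicit Arguments. Unset Strict Implicit. Unset Printing Implicit Defensive.

Lemma models_and (P : finType) (f g : form P) :
  models (Fand f g) = models f :&: models g.
Proof. by apply/setP => w; rewrite !inE. Qed.

Lemma models_bot (P : finType) : models (@Fbot P) = set0.
Proof. by apply/setP => w; rewrite !inE. Qed.

Lemma lequivP (P : finType) (f g : form P) : lequiv f g <-> models f = models g.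
Proof.
rewrite /lequiv /entails; split => [[h1 h2]|->]; last by [].
by apply/eqP; rewrite eqEsubset h1 h2.
Qed.

Lemma consistentP (P : finType) (f : form P) : consistent f <-> models f != set0.
Proof.
rewrite /consistent /entails models_bot subset0; split => h; exact/negP.
Qed.

Definition lit (P : finType) (w : valuation P) (x : P) : form P :=
  if w x then Fvar x else Fneg (Fvar x).
Definition chi (P : finType) (w : valuation P) : form P := bigconj [seq lit w x | x <- enum P].
Definition bigdisj (P : finType) (s : seq (form P)) : form P := foldr (@For P) Fbot s.
Definition form_of (P : finType) (X : {set valuation P}) : form P :=
  bigdisj [seq chi w | w <- enum X].

Lemma holds_bigconj (P : finType) v (s : seq (form P)) : holds v (bigconj s) = all (holds v) s.
Proof. by elim: s => //= f s ->. Qed.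
Lemma holds_bigdisj (P : finType) v (s : seq (form P)) : holds v (bigdisj s) = has (holds v) s.
Proof. by elim: s => //= f s ->. Qed.

Lemma holds_chi (P : finType) (v w : valuation P) : holds v (chi w) = (v == w).
Proof.
rewrite holds_bigconj all_map; apply/allP/eqP => [H|->]; last first.
  by move=> x _ /=; rewrite /lit; case E: (w x) => /=; rewrite E.
apply/ffunP => x; have := H x; rewrite mem_enum /= /lit => /(_ isT).
by case E: (w x) => /=; case: (v x).
Qed.

Lemma models_form_of (P : finType) (X : {set valuation P}) : models (form_of X) = X.
Proof.
apply/setP => v; rewrite inE holds_bigdisj has_map.
apply/hasP/idP => [[w wX /=]|vX]; first by rewrite holds_chi => /eqP ->; rewrite -mem_enum.
by exists v; rewrite ?mem_enum //= holds_chi.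
Qed.

Lemma es_surj (P : finType) (E : Type) (B : E -> form P) :
  epistemic_space B -> forall X : {set valuation P}, X != set0 -> exists e, models (B e) = X.
Proof.
move=> [_ [_ H]] X X0.
have hc : consistent (form_of X) by apply/consistentP; rewrite models_form_of.
have [e /lequivP he] := H (form_of X) hc.
by exists e; rewrite he models_form_of.
Qed.

Lemma pairI (T : finType) (X : {set T}) x y : x \in X -> y \in X -> X :&: [set x; y] = [set x; y].
Proof.
move=> hx hy; apply/setIidPr; apply/subsetP => z; rewrite !inE => /orP[] /eqP ->//.
Qed.

Lemma pair_ne0 (T : finType) (x y : T) : [set x; y] != set0.
Proof. by apply/set0Pn; exists x; rewrite !inE eqxx. Qed.

Lemma rationalize (P : finType) (sel : {set valuation P} -> {set valuation P}) :
  (forall X, X != set0 -> sel X \subset X) ->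
  (forall X, X != set0 -> sel X != set0) ->
  (forall X Z, X :&: Z != set0 -> sel X :&: Z \subset sel (X :&: Z)) ->
  (forall X Z, X :&: Z != set0 -> sel X :&: Z != set0 -> sel (X :&: Z) \subset sel X :&: Z) ->
  let R := fun w w' => w \in sel [set w; w'] in
  total_preorder R /\ forall X, X != set0 -> sel X = Defs.maxset X R.
Proof.
move=> s1 s0 s3 s4 R.
have L3 (X : {set valuation P}) w x : X != set0 -> w \in sel X -> x \in X -> R w x.
  move=> X0 wX xX; have wX' : w \in X := subsetP (s1 X X0) w wX.
  have := s3 X [set w; x]; rewrite pairI // => /(_ (pair_ne0 _ _)) /subsetP; apply.
  by rewrite inE wX !inE eqxx.
have L4 (X : {set valuation P}) x y : X != set0 -> y \in sel X -> x \in X -> R x y -> x \in sel X.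
  move=> X0 yX xX rxy; have yX' : y \in X := subsetP (s1 X X0) y yX.
  have ne : sel X :&: [set x; y] != set0.
    by apply/set0Pn; exists y; rewrite inE yX !inE eqxx orbT.
  have := s4 X [set x; y]; rewrite pairI // => /(_ (pair_ne0 _ _) ne) /subsetP /(_ x rxy).
  by rewrite inE => /andP[].
split; first split.
- move=> w w'; have /set0Pn [z zs] := s0 _ (pair_ne0 w w').
  have := subsetP (s1 _ (pair_ne0 w w')) z zs; rewrite !inE => /orP[] /eqP Ez; subst z.
    by rewrite /R zs.
  by rewrite /R [[set w'; w]]setUC zs orbT.
- move=> y x z rxy ryz.
  set X := [set x; y; z].
  have X0 : X != set0 by apply/set0Pn; exists x; rewrite !inE eqxx.
  have xX : x \in X by rewrite !inE eqxx.
  have yX : y \in X by rewrite !inE eqxx orbT.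
  have zX : z \in X by rewrite !inE eqxx !orbT.
  have /set0Pn [t ts] := s0 _ X0.
  have : x \in sel X.
    have : t \in [set x; y; z] := subsetP (s1 _ X0) t ts.
    rewrite !inE => /orP[/orP[/eqP Et|/eqP Et]|/eqP Et]; subst t => //.
      exact: (L4 _ _ _ X0 ts xX rxy).
    by apply: (L4 _ _ _ X0 _ xX rxy); exact: (L4 _ _ _ X0 ts yX ryz).
  by move=> xs; apply: L3 xs zX.
- move=> X X0; apply/setP => w; rewrite inE; apply/idP/andP => [ws|[wX /forall_inP H]].
    split; first exact: subsetP (s1 X X0) w ws.
    by apply/forall_inP => x xX; apply: (L3 _ _ _ X0 ws xX).
  have /set0Pn [t ts] := s0 _ X0.
  have tX : t \in X := subsetP (s1 X X0) t ts.
  exact: (L4 _ _ _ X0 ts wX (H t tX)).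
Qed.

Lemma pair_max (P : finType) (R : rel (valuation P)) w w' :
  total_preorder R -> R w w' = (w \in Defs.maxset [set w; w'] R).
Proof.
move=> [tot _]; rewrite inE !inE eqxx /=.
have Rww : R w w by have := tot w w; rewrite orbb.
apply/idP/forall_inP => [h x|/(_ w')]; last by rewrite !inE eqxx orbT; apply.
by rewrite !inE => /orP[]/eqP ->.
Qed.

Lemma max3 (P : finType) (R : rel (valuation P)) X Z :
  Defs.maxset X R :&: Z \subset Defs.maxset (X :&: Z) R.
Proof.
apply/subsetP => w; rewrite !inE => /andP[/andP[wX /forall_inP H] wZ].
rewrite wX wZ /=; apply/forall_inP => x; rewrite inE => /andP[xX _]; exact: H.
Qed.

Lemma max4 (P : finType) (R : rel (valuation P)) X Z :
  transitive R -> Defs.maxset X R :&: Z != set0 ->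
  Defs.maxset (X :&: Z) R \subset Defs.maxset X R :&: Z.
Proof.
move=> tr /set0Pn [v]; rewrite !inE => /andP[/andP[vX /forall_inP Hv] vZ].
apply/subsetP => w; rewrite !inE => /andP[/andP[wX wZ] /forall_inP Hw].
rewrite wX wZ /= andbT; apply/forall_inP => x xX.
apply: (tr v) (Hv x xX); apply: Hw; by rewrite inE vX.
Qed.

Lemma max6 (P : finType) (R : rel (valuation P)) K X :
  transitive R -> K = Defs.maxset setT R -> K :&: X != set0 ->
  Defs.maxset X R = K :&: X.
Proof.
move=> tr -> /set0Pn [v]; rewrite !inE => /andP[/forall_inP Hv vX].
apply/setP => w; rewrite !inE; apply/andP/andP => [[wX /forall_inP Hw]|[/forall_inP Hw wX]]; split => //.
  apply/forall_inP => x _; apply: (tr v) (Hv x _) => //; exact: Hw.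
by apply/forall_inP => x _; apply: Hw.
Qed.

Lemma max7 (P : finType) (R1 R2 R : rel (valuation P)) X :
  (forall w w', R1 w w' -> R2 w w' -> R w w') ->
  Defs.maxset X R1 :&: Defs.maxset X R2 \subset Defs.maxset X R.
Proof.
move=> H; apply/subsetP => w; rewrite !inE => /andP[/andP[wX /forall_inP H1] /andP[_ /forall_inP H2]].
rewrite wX; apply/forall_inP => x xX; apply: H; [exact: H1|exact: H2].
Qed.

Lemma max8 (P : finType) (R1 R2 R : rel (valuation P)) X :
  total_preorder R1 -> total_preorder R2 ->
  (forall w w', R1 w w' -> strict R2 w w' -> strict R w w') ->
  (forall w w', R2 w w' -> strict R1 w w' -> strict R w w') ->
  Defs.maxset X R1 :&: Defs.maxset X R2 != set0 ->
  Defs.maxset X R \subset Defs.maxset X R1 :&: Defs.maxset X R2.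
Proof.
move=> [t1 tr1] [t2 tr2] s12 s21 /set0Pn [v].
rewrite !inE => /andP[/andP[vX /forall_inP H1] /andP[_ /forall_inP H2]].
apply/subsetP => w; rewrite !inE => /andP[wX /forall_inP H].
have Rwv : R w v := H v vX.
rewrite wX /=; apply/andP; split; apply/forall_inP => x xX.
- case: (boolP (R1 w v)) => [r|nr]; first exact: (tr1 v) r (H1 x xX).
  have : strict R v w.
    apply: s21; first exact: H2.
    by rewrite /strict nr andbT; have := t1 w v; rewrite (negbTE nr).
  by rewrite /strict Rwv andbF.
- case: (boolP (R2 w v)) => [r|nr]; first exact: (tr2 v) r (H2 x xX).
  have : strict R v w.
    apply: s12; first exact: H1.
    by rewrite /strict nr andbT; have := t2 w v; rewrite (negbTE nr).
  by rewrite /strict Rwv andbF.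
Qed.

Lemma profile_eq (d : Order.disp_t) (S : orderType d) (E : Type) (Phi Psi : profile S E) :
  graph Phi = graph Psi -> Phi = Psi.
Proof.
case: Phi => g s n; case: Psi => g' s' n' /= eg; subst g'.
by rewrite (bool_irrelevance s s') (bool_irrelevance n n').
Qed.

Lemma restrict_nn (d : Order.disp_t) (S : orderType d) (E : Type) (Phi : profile S E) (p : pred S) h h' :
  restrict Phi (fun x => ~~ ~~ p x) h = restrict Phi p h'.
Proof. by apply: profile_eq => /=; apply: eq_filter => a; rewrite negbK. Qed.

Lemma inter_ne0 (T : finType) (X Z : {set T}) : X :&: Z != set0 -> X != set0 /\ Z != set0.
Proof.
by case/set0Pn => x; rewrite inE => /andP[hx hz]; split; apply/set0Pn; exists x.
Qed.

Theorem theorem2 (P : finType) (d : Order.disp_t) (S : orderType d)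
  (E : Type) (B : E -> form P) (nabla : profile S E -> E -> E) :
  epistemic_space B ->
  well_founded (fun x y : S => (x < y)%O) ->
  ESF_all B nabla <->
  exists! A : assignment P S E, faithful B A /\ represents B nabla A.
Proof.
move=> es _.
have [inhE [consB _]] := es.
have Bne e : models (B e) != set0 by apply/consistentP.
pose rep (X : {set valuation P}) : E := epsilon inhE (fun e => models (B e) = X).
have repP X : X != set0 -> models (B (rep X)) = X.
  by move=> X0; apply: (epsilon_spec inhE (fun e => models (B e) = X)); exact: es_surj.
have setT0 : [set: valuation P] != set0.
  by apply/set0Pn; exists [ffun _ => true]; rewrite inE.
split.
- move=> [H1 [H2 [H3 [H4 [H5 [H6 [H7 H8]]]]]]].
  pose sel Phi X := models (B (nabla Phi (rep X))).
  pose A : assignment P S E := fun Phi w w' => w \in sel Phi [set w; w'].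
  have Ninv Phi e e' : models (B e) = models (B e') -> models (B (nabla Phi e)) = models (B (nabla Phi e')).
    by move=> h; apply/lequivP; apply: H2 => //; apply/lequivP.
  have selE Phi e : models (B (nabla Phi e)) = sel Phi (models (B e)).
    by apply: Ninv; rewrite repP.
  have RA Phi := @rationalize P (sel Phi).
  have RR : forall Phi, total_preorder (A Phi) /\ forall X, X != set0 -> sel Phi X = Defs.maxset X (A Phi).
    move=> Phi; apply: RA.
    + move=> X X0; rewrite /sel -{2}(repP X X0); exact: H1.
    + by move=> X X0; apply: Bne.
    + move=> X Z XZ; have [X0 Z0] := inter_ne0 XZ.
      have := H3 Phi (rep (X :&: Z)) (rep X) (rep Z).
      rewrite /entails models_and (repP Z Z0); apply.
      by apply/lequivP; rewrite models_and !repP.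
    + move=> X Z XZ ne; have [X0 Z0] := inter_ne0 XZ.
      have := H4 Phi (rep (X :&: Z)) (rep X) (rep Z).
      rewrite /entails models_and (repP Z Z0); apply.
        by apply/lequivP; rewrite models_and !repP.
      by apply/consistentP; rewrite models_and (repP Z Z0).
  have tp Phi : total_preorder (A Phi) := (RR Phi).1.
  have req Phi : forall X, X != set0 -> sel Phi X = Defs.maxset X (A Phi) := (RR Phi).2.
  have rp : represents B nabla A.
    by move=> Phi e; rewrite selE req.
  exists A; split; first split.
  + split.
    * split; first exact: tp.
      move=> Phi Psi heq.
      have hs X : sel Phi X = sel Psi X.
        by apply/lequivP; apply: H2 => //; apply/lequivP.
      apply: functional_extensionality => w; apply: functional_extensionality => w'.
      by rewrite /A hs.
    * move=> j k ej ek neq heq; have [e' ne] := H5 j k ej ek neq.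
      by apply: ne; apply/lequivP; rewrite (rp (single j ej)) (rp (single k ek)) heq.
    * move=> Phi hc; have e1 := repP _ setT0.
      have hc' : consistent (Fand (conjB B Phi) (B (rep setT))).
        by apply/consistentP; rewrite models_and e1 setIT; apply/consistentP.
      have /lequivP := H6 Phi (rep setT) hc'.
      by rewrite rp models_and e1 setIT => ->.
    * move=> Phi p h1 h2 w w' a1 a2.
      move/subsetP: (H7 Phi (rep [set w; w']) p h1 h2); apply.
      by rewrite models_and inE; apply/andP; split; [exact: a1|exact: a2].
    * move=> Phi p h1 h2 w w' a1 /andP[a2 na2].
      have hc : consistent (Fand (B (nabla (restrict Phi p h1) (rep [set w; w'])))
                 (B (nabla (restrict Phi (fun x => ~~ p x) h2) (rep [set w; w'])))).
        by apply/consistentP/set0Pn; exists w; rewrite models_and inE; apply/andP; split; [exact: a1|exact: a2].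
      have a : A Phi w w'.
        move/subsetP: (H7 Phi (rep [set w; w']) p h1 h2); apply.
        by rewrite models_and inE; apply/andP; split; [exact: a1|exact: a2].
      rewrite /strict a /=; apply/negP => a'.
      move: na2; rewrite /A [[set w'; w]]setUC => /negP; apply.
      move: a'; rewrite /A [[set w'; w]]setUC => a'.
      have := subsetP (H8 Phi (rep [set w; w']) p h1 h2 hc) w' a'.
      by rewrite models_and inE => /andP[].
  + exact: rp.
  + move=> A' [[[tp' _] _ _ _ _] rp'].
    apply: functional_extensionality => Phi; apply: functional_extensionality => w.
    apply: functional_extensionality => w'.
    rewrite (pair_max w w' (tp' Phi)) -{1}(repP _ (pair_ne0 w w')) -rp'.
    by rewrite /A /sel.
- move=> [A [[[[tp bas] f1 f3 f4 f5] rp] _]].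
  have tr Phi : transitive (A Phi) by case: (tp Phi).
  split; [|split; [|split; [|split; [|split; [|split; [|split]]]]]].
  + move=> Phi e; rewrite /entails rp; apply/subsetP => w; by rewrite inE => /andP[].
  + move=> Phi Phi' e e' heq /lequivP hl; apply/lequivP; by rewrite !rp (bas _ _ heq) hl.
  + move=> Phi e e' e'' /lequivP hl; rewrite /entails models_and !rp hl models_and; exact: max3.
  + move=> Phi e e' e'' /lequivP hl /consistentP hc; rewrite /entails models_and !rp hl models_and.
    apply: max4 => //; by move: hc; rewrite models_and rp.
  + move=> j k ej ek neq; apply: NNPP => H; apply: (f1 j k ej ek neq).
    apply: functional_extensionality => w; apply: functional_extensionality => w'.
    have [e he] := es_surj es (pair_ne0 w w').
    rewrite (pair_max w w' (tp _)) (pair_max w w' (tp (single k ek))) -he -!rp.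
    have : lequiv (B (nabla (single j ej) e)) (B (nabla (single k ek) e)).
      by apply: NNPP => hn; apply: H; exists e.
    by move/lequivP ->.
  + move=> Phi e /consistentP hc; apply/lequivP; rewrite rp models_and.
    apply: max6 => //; last by move: hc; rewrite models_and.
    apply: f3; apply/consistentP; apply: contraNneq hc => h0; by rewrite models_and h0 set0I.
  + move=> Phi e p h1 h2; rewrite /entails models_and !rp; apply: max7; exact: f4.
  + move=> Phi e p h1 h2 /consistentP; rewrite /entails !models_and !rp => hc.
    apply: max8 => //.
    * exact: f5.
    * move=> w w' a2 s1.
      have h1' : has (fun a => ~~ ~~ p a.1) (graph Phi) by apply: (sub_has _ h1) => a; rewrite negbK.
      have := f5 Phi (fun x => ~~ p x) h2 h1' w w' a2.
      by rewrite (restrict_nn h1' h1); apply.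
Qed.
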